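(* Let $n\geq 1$ be an integer, let $R$ be a commutative ring, let $\iota:\mu_n\to R^\times$ be an injective group homomorphism (extended by $\iota(0)=0$), and let $X\in R$ be an $\mathbb{S}[\mu_{n,+}]$-generator of $R$ with respect to $\iota$. Let $m$ be a positive integer. Then the class of $Y$ in the $R$-algebra $R[Y]/(Y^m-X)$ is an $\mathbb{S}[\mu_{n,+}]$-generator of $R[Y]/(Y^m-X)$, with respect to the composite of $\iota$ with the canonical map $R\to R[Y]/(Y^m-X)$.
   Context: $\mu_n$ denotes the multiplicative group of $n$-th roots of unity and $\mu_{n,+}=\mu_n\cup\{0\}$. Given a ring $A$ and an injective group homomorphism $\iota:\mu_n\to A^\times$ (with $\iota(0):=0$), an element $X\in A$ is called an $\mathbb{S}[\mu_{n,+}]$-generator of $A$ if every $z\in A$ can be written uniquely as a finite sum $z=\sum_{j\ge 0}\iota(\alpha_j)X^j$ with coefficients $\alpha_j\in\mu_n\cup\{0\}$, only finitely many nonzero. *)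

(* Defs.v *)
From HB Require Import structures.
From mathcomp Require Import all_boot all_order all_algebra all_field.
Set Implicit Arguments. Unset Strict Implicit. Unset Printing Implicit Defensive.
Import GRing.Theory.
Local Open Scope ring_scope.

Definition mu (n : nat) : pred algC := fun z => z ^+ n == 1.
Definition mu_plus (n : nat) : pred algC := fun z => (z == 0) || (z ^+ n == 1).

Definition inj_mu_hom (A : nzRingType) (n : nat) (iota : algC -> A) : Prop :=
  [/\ {in mu n &, {morph iota : x y / x * y}},
      {in mu n, forall x, exists y, y * iota x = 1 /\ iota x * y = 1} &
      {in mu n &, injective iota}].

Definition iota_plus (A : nzRingType) (iota : algC -> A) (z : algC) : A :=
  if z == 0 then 0 else iota z.

Definition is_Smu_generator (A : nzRingType) (n : nat) (iota : algC -> A) (X : A) : Prop :=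
  (forall z : A, exists (alpha : nat -> algC) (N : nat),
      [/\ (forall j, mu_plus n (alpha j)),
          (forall j, (N <= j)%N -> alpha j = 0) &
          z = \sum_(j < N) iota_plus iota (alpha j) * X ^+ j])
  /\
  (forall (alpha beta : nat -> algC) (N : nat),
      (forall j, mu_plus n (alpha j)) -> (forall j, mu_plus n (beta j)) ->
      (forall j, (N <= j)%N -> alpha j = 0) -> (forall j, (N <= j)%N -> beta j = 0) ->
      \sum_(j < N) iota_plus iota (alpha j) * X ^+ j =
      \sum_(j < N) iota_plus iota (beta j) * X ^+ j ->
      forall j, alpha j = beta j).

(* Main.v *)
Require Import Defs.
From HB Require Import structures.
From mathcomp Require Import all_boot all_order all_algebra all_field.
Import GRing.Theory.
Local Open Scope ring_scope.

Lemma sum_ext (V : nmodType) (f : nat -> V) A B : (A <= B)%N ->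
  (forall i, (A <= i)%N -> f i = 0) -> \sum_(i < B) f i = \sum_(i < A) f i.
Proof.
move=> AB fA; rewrite -!(big_mkord xpredT) (big_cat_nat (leq0n A) AB) /=.
rewrite [X in _ + X]big1_seq ?addr0 // => i /andP[_]; rewrite mem_index_iota => /andP[+ _].
exact: fA.
Qed.

Lemma sum_split (V : nmodType) (F : nat -> V) m M :
  \sum_(i < m * M) F i = \sum_(j < M) \sum_(k < m) F (m * j + k)%N.
Proof.
elim: M => [|M IH]; first by rewrite muln0 !big_ord0.
by rewrite big_ord_recr /= -IH mulnSr big_split_ord.
Qed.

Section Aux.
Variables (R : comNzRingType) (X : R) (m : nat).
Hypothesis m_gt0 : (0 < m)%N.
Local Notation h := ('X^m - X%:P).
Local Notation Q := {poly %/ h}.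
Local Notation Yq := (in_qpoly h 'X).

Lemma mkm : mk_monic h = h.
Proof. by rewrite /mk_monic size_XnsubC // monicXnsubC // ltnS m_gt0. Qed.

Lemma val_inq p : val (in_qpoly h p) = Pdiv.CommonRing.rmodp p h.
Proof. by rewrite /= /mk_monic size_XnsubC // monicXnsubC // ltnS m_gt0. Qed.

Lemma qpolyC_in (c : R) : qpolyC h c = in_qpoly h c%:P.
Proof.
apply: val_inj; rewrite val_inq Pdiv.CommonRing.rmodp_small // size_XnsubC //.
by rewrite (leq_ltn_trans (size_polyC_leq1 c)).
Qed.

Lemma Yq_m : Yq ^+ m = qpolyC h X.
Proof.
rewrite qpolyC_in -rmorphXn; apply: val_inj; rewrite !val_inq; set hh := h.
have -> : 'X^m = 1 * h + X%:P :> {poly R} by rewrite mul1r subrK.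
rewrite Pdiv.RingMonic.rmodp_addl_mul_small ?monicXnsubC //.
  rewrite Pdiv.CommonRing.rmodp_small // size_XnsubC //.
  by rewrite (leq_ltn_trans (size_polyC_leq1 X)).
by rewrite size_XnsubC // (leq_ltn_trans (size_polyC_leq1 X)).
Qed.

Lemma Yq_exp i : Yq ^+ i = qpolyC h (X ^+ (i %/ m)) * Yq ^+ (i %% m).
Proof.
by rewrite {1}(divn_eq i m) exprD mulnC exprM Yq_m rmorphXn.
Qed.

Lemma val_sum (c : nat -> R) :
  val (\sum_(k < m) qpolyC h (c k) * Yq ^+ k) = \poly_(k < m) c k.
Proof.
have -> : \sum_(k < m) qpolyC h (c k) * Yq ^+ k = in_qpoly h (\poly_(k < m) c k).
  rewrite poly_def rmorph_sum; apply: eq_bigr => k _.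
  by rewrite qpolyC_in -rmorphXn -rmorphM mul_polyC.
rewrite val_inq Pdiv.CommonRing.rmodp_small // size_XnsubC //.
by rewrite ltnS size_poly.
Qed.


Lemma regroup (c : nat -> R) M : (forall i, (M <= i)%N -> c i = 0) ->
  \sum_(i < M) qpolyC h (c i) * Yq ^+ i =
  \sum_(k < m) qpolyC h (\sum_(j < M) c (m * j + k)%N * X ^+ j) * Yq ^+ k.
Proof.
move=> cM.
rewrite -(@sum_ext _ (fun i => qpolyC h (c i) * Yq ^+ i) M (m * M)); first last.
- by move=> i /cM ->; rewrite rmorph0 mul0r.
- by rewrite leq_pmull.
rewrite (@sum_split _ (fun i => qpolyC h (c i) * Yq ^+ i)) /=.
rewrite (eq_bigr (fun k : 'I_m => \sum_(j < M) qpolyC h (c (m * j + k)%N) * qpolyC h (X ^+ j) * Yq ^+ k)); last first.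
  move=> k _; rewrite rmorph_sum mulr_suml; apply: eq_bigr => j _.
  by rewrite rmorphM.
rewrite exchange_big /=; apply: eq_bigr => j _; apply: eq_bigr => k _.
rewrite Yq_exp -mulrA; congr (_ * (qpolyC h (X ^+ _) * Yq ^+ _)).
  by rewrite mulnC divnMDl // divn_small // addn0.
by rewrite mulnC modnMDl modn_small.
Qed.

End Aux.

Lemma iota_plus_comp (R : comNzRingType) (h : {poly R}) (iota : algC -> R) a :
  iota_plus (fun z => qpolyC h (iota z)) a = qpolyC h (iota_plus iota a).
Proof. by rewrite /iota_plus; case: ifP => // _; rewrite rmorph0. Qed.

Theorem proposition5p4 (n : nat) (R : comNzRingType) (iota : algC -> R) (X : R) (m : nat) :
  (0 < n)%N ->
  inj_mu_hom n iota ->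
  is_Smu_generator n iota X ->
  (0 < m)%N ->
  is_Smu_generator n (fun z => qpolyC ('X^m - X%:P) (iota z))
                     (in_qpoly ('X^m - X%:P) 'X).
Proof.
move=> _ _ [gen uniq] m_gt0.
have ip0 : iota_plus iota 0 = 0 by rewrite /iota_plus eqxx.
split.
- move=> z.
  pose c k := (val z)`_k.
  have zE : z = \sum_(k < m) qpolyC ('X^m - X%:P) (c k) * (in_qpoly ('X^m - X%:P) 'X) ^+ k.
    apply: val_inj; rewrite val_sum //.
    have sz : (size (val z) <= m)%N.
      have E : (size (mk_monic ('X^m - X%:P))).-1 = m by rewrite mkm // size_XnsubC.
      exact: (leq_trans (size_npoly z) (eq_leq E)).
    apply/polyP => k; rewrite coef_poly; case: ltnP => // km.
    by rewrite nth_default // (leq_trans sz km).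
  have : forall k : 'I_m, exists p : (nat -> algC) * nat,
      [/\ (forall j, mu_plus n (p.1 j)), (forall j, (p.2 <= j)%N -> p.1 j = 0) &
          c k = \sum_(j < p.2) iota_plus iota (p.1 j) * X ^+ j].
    move=> k; have [a [N [H1 H2 H3]]] := gen (c k); by exists (a, N).
  case/fin_all_exists => P HP.
  pose M := (\max_(k < m) (P k).2)%N.
  exists (fun i => (P (Ordinal (div.ltn_pmod i m_gt0))).1 (i %/ m)%N), (m * M)%N.
  split.
  + by move=> j; have [] := HP (Ordinal (div.ltn_pmod j m_gt0)).
  + move=> j jM; have [_ H2 _] := HP (Ordinal (div.ltn_pmod j m_gt0)); apply: H2.
    have HM := @leq_bigmax _ (fun k : 'I_m => (P k).2) (Ordinal (div.ltn_pmod j m_gt0)). apply: leq_trans HM _.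
    by rewrite leq_divRL // mulnC.
  + rewrite (eq_bigr (fun i : 'I__ => qpolyC ('X^m - X%:P)
        (iota_plus iota ((P (Ordinal (div.ltn_pmod i m_gt0))).1 (i %/ m)%N)) *
        (in_qpoly ('X^m - X%:P) 'X) ^+ i)); last by move=> i _; rewrite iota_plus_comp.
    rewrite (@regroup R X m _ (fun i => iota_plus iota ((P (Ordinal (div.ltn_pmod i m_gt0))).1 (i %/ m)%N))) //; last first.
      move=> i iM; have [_ H2 _] := HP (Ordinal (div.ltn_pmod i m_gt0)); rewrite H2 //.
      apply: (leq_trans (@leq_bigmax _ (fun k : 'I_m => (P k).2) _)).
      by rewrite leq_divRL // mulnC.
    rewrite {1}zE; apply: eq_bigr => k _; congr (qpolyC _ _ * _).
    have [_ H2 ->] := HP k.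
    have kk : forall j, ((m * j + k) %% m = k)%N /\ ((m * j + k) %/ m = j)%N.
      move=> j; rewrite mulnC modnMDl modn_small // divnMDl // divn_small //.
      by rewrite addn0.
    rewrite [RHS](eq_bigr (fun j : 'I__ => iota_plus iota ((P k).1 j) * X ^+ j)); last first.
      by move=> j _; have [e1 e2] := kk j; rewrite e2; congr (iota_plus iota ((P _).1 _) * _); exact: val_inj.
    rewrite (@sum_ext _ (fun j => iota_plus iota ((P k).1 j) * X ^+ j) (P k).2 (m * M)) //.
      apply: (leq_trans (@leq_bigmax _ (fun k : 'I_m => (P k).2) k)); exact: leq_pmull.
    by move=> j /H2 ->; rewrite ip0 mul0r.
- move=> alpha beta N Ha Hb Na Nb E0.
  have : \sum_(j < N) qpolyC ('X^m - X%:P) (iota_plus iota (alpha j)) * (in_qpoly ('X^m - X%:P) 'X) ^+ j =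
         \sum_(j < N) qpolyC ('X^m - X%:P) (iota_plus iota (beta j)) * (in_qpoly ('X^m - X%:P) 'X) ^+ j.
    apply: etrans (etrans _ E0) _; apply: eq_bigr => j _; by rewrite iota_plus_comp.
  rewrite (@regroup R X m m_gt0 (fun i => iota_plus iota (alpha i))); last first.
    by move=> i /Na ->.
  rewrite (@regroup R X m m_gt0 (fun i => iota_plus iota (beta i))); last first.
    by move=> i /Nb ->.
  move/(congr1 val); rewrite (@val_sum R X m m_gt0 (fun k => \sum_(j < N) iota_plus iota (alpha (m * j + k)%N) * X ^+ j)) (@val_sum R X m m_gt0 (fun k => \sum_(j < N) iota_plus iota (beta (m * j + k)%N) * X ^+ j)) => E.
  have Ek : forall k, (k < m)%N -> forall j, alpha (m * j + k)%N = beta (m * j + k)%N.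
    move=> k km; have := congr1 (fun p : {poly R} => p`_k) E; rewrite /= !coef_poly km => Ek.
    apply: (uniq (fun j => alpha (m * j + k)%N) (fun j => beta (m * j + k)%N) N) => //.
    + by move=> j jN; apply: Na; apply: leq_trans jN _; apply: leq_trans (leq_pmull _ m_gt0) (leq_addr _ _).
    + by move=> j jN; apply: Nb; apply: leq_trans jN _; apply: leq_trans (leq_pmull _ m_gt0) (leq_addr _ _).
  move=> i; rewrite (divn_eq i m) mulnC; apply: Ek.
  by rewrite ltn_mod.
Qed.
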